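(* Let $\kappa>\gamma\ge0$, $\chi\in\mathbb{R}$, and let $(\psi_1,\psi_2)(x,z)$ be a smooth solution, with $\psi_j,\psi_{j,x}$ decaying sufficiently fast as $|x|\to\infty$ so that all integrals below are finite and boundary terms vanish, of $$i\psi_{1,z}=-\psi_{1,xx}-\kappa\psi_2+i\gamma\psi_1+\chi(|\psi_1|^2+|\psi_2|^2)\psi_1,$$ $$i\psi_{2,z}=-\psi_{2,xx}-\kappa\psi_1-i\gamma\psi_2+\chi(|\psi_1|^2+|\psi_2|^2)\psi_2.$$ Define $S_0=\int_{\mathbb{R}}(|\psi_1|^2+|\psi_2|^2)dx$, $S_1=\int_{\mathbb{R}}(\psi_1^*\psi_2+\psi_2^*\psi_1)dx$, $S_2=i\int_{\mathbb{R}}(\psi_1^*\psi_2-\psi_2^*\psi_1)dx$, $S_3=\int_{\mathbb{R}}(|\psi_1|^2-|\psi_2|^2)dx$. Then $\dot S_0=2\gamma S_3$, $\dot S_1=0$, $\dot S_2=-2\kappa S_3$, $\dot S_3=2\gamma S_0+2\kappa S_2$; the quantities $S_1$ and $C=\kappa S_0+\gamma S_2$ are conserved; and with $\omega=\sqrt{\kappa^2-\gamma^2}$ there are constants $A_1,A_2$ such that $S_0(z)=\kappa C/\omega^2+A_1\cos(2\omega z)+A_2\sin(2\omega z)$. In particular $S_0$ is bounded in $z$.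
   Context: Overdot denotes $d/dz$. *)

(* Defs.v *)
From Stdlib Require Import Reals.
Open Scope R_scope.

Record cplx : Type := mkC { Re : R ; Im : R }.

Definition RtoC (r : R) : cplx := mkC r 0.
Definition Ci : cplx := mkC 0 1.
Definition Cadd (a b : cplx) : cplx := mkC (Re a + Re b) (Im a + Im b).
Definition Copp (a : cplx) : cplx := mkC (- Re a) (- Im a).
Definition Csub (a b : cplx) : cplx := Cadd a (Copp b).
Definition Cmul (a b : cplx) : cplx :=
  mkC (Re a * Re b - Im a * Im b) (Re a * Im b + Im a * Re b).
Definition Cscal (r : R) (a : cplx) : cplx := Cmul (RtoC r) a.
Definition Cconj (a : cplx) : cplx := mkC (Re a) (- Im a).
Definition Cabs (a : cplx) : R := sqrt (Re a ^ 2 + Im a ^ 2).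

Definition pderiv_x (f f' : R -> R -> cplx) : Prop :=
  forall x z,
    derivable_pt_lim (fun t => Re (f t z)) x (Re (f' x z)) /\
    derivable_pt_lim (fun t => Im (f t z)) x (Im (f' x z)).

Definition pderiv_z (f f' : R -> R -> cplx) : Prop :=
  forall x z,
    derivable_pt_lim (fun t => Re (f x t)) z (Re (f' x z)) /\
    derivable_pt_lim (fun t => Im (f x t)) z (Im (f' x z)).

Definition jcont (f : R -> R -> cplx) : Prop :=
  forall x z eps, 0 < eps -> exists d, 0 < d /\
    forall x' z', Rabs (x' - x) < d -> Rabs (z' - z) < d ->
      Cabs (Csub (f x' z') (f x z)) < eps.

Definition improper_integral (f : R -> R) (l : R) : Prop :=
  (forall a b, inhabited (Riemann_integrable f a b)) /\
  forall eps, 0 < eps -> exists M, 0 <= M /\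
    forall a b (pr : Riemann_integrable f a b),
      a <= - M -> M <= b -> Rabs (RiemannInt pr - l) < eps.

Definition cintegral (f : R -> cplx) (L : cplx) : Prop :=
  improper_integral (fun x => Re (f x)) (Re L) /\
  improper_integral (fun x => Im (f x)) (Im L).

Definition vanishes_at_infty (f : R -> cplx) : Prop :=
  forall eps, 0 < eps -> exists M, forall x, M < Rabs x -> Cabs (f x) < eps.

(* Main.v *)
From Coquelicot Require Import Coquelicot.
Require Import Defs.
From Stdlib Require Import Reals Lra.
Open Scope R_scope.

Lemma exR_plus (f g : R -> R) a b : ex_RInt f a b -> ex_RInt g a b -> ex_RInt (fun x => f x + g x) a b.
Proof. intros; apply (ex_RInt_plus f g); auto. Qed.
Lemma exR_minus (f g : R -> R) a b : ex_RInt f a b -> ex_RInt g a b -> ex_RInt (fun x => f x - g x) a b.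
Proof. intros; apply (ex_RInt_minus f g); auto. Qed.
Lemma exR_scal (f : R -> R) a b k : ex_RInt f a b -> ex_RInt (fun x => k * f x) a b.
Proof. intros; apply (ex_RInt_scal f a b k); auto. Qed.
Lemma RI_plus (f g : R -> R) a b : ex_RInt f a b -> ex_RInt g a b -> RInt (fun x => f x + g x) a b = RInt f a b + RInt g a b.
Proof. intros; apply (RInt_plus f g); auto. Qed.
Lemma RI_minus (f g : R -> R) a b : ex_RInt f a b -> ex_RInt g a b -> RInt (fun x => f x - g x) a b = RInt f a b - RInt g a b.
Proof. intros; apply (RInt_minus f g); auto. Qed.
Lemma RI_scal (f : R -> R) a b k : ex_RInt f a b -> RInt (fun x => k * f x) a b = k * RInt f a b.
Proof. intros; apply (RInt_scal f a b k); auto. Qed.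
Lemma RI_chasles (f : R -> R) a b c : ex_RInt f a b -> ex_RInt f b c -> RInt f a b + RInt f b c = RInt f a c.
Proof. intros; apply (RInt_Chasles f); auto. Qed.

Definition impI (f : R -> R) (l : R) : Prop :=
  (forall a b, ex_RInt f a b) /\
  forall eps, 0 < eps -> exists M, 0 <= M /\
    forall a b, a <= - M -> M <= b -> Rabs (RInt f a b - l) < eps.

Lemma impI_ext f g l : (forall x, f x = g x) -> impI f l -> impI g l.
Proof.
  intros E [H1 H2]; split.
  - intros a b; apply (ex_RInt_ext f); auto.
  - intros eps He; destruct (H2 eps He) as [M [HM HH]]; exists M; split; auto.
    intros a b Ha Hb. rewrite <- (RInt_ext f g); auto.
Qed.

Lemma impI_lin f g l1 l2 c1 c2 : impI f l1 -> impI g l2 ->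
  impI (fun x => c1 * f x + c2 * g x) (c1 * l1 + c2 * l2).
Proof.
  intros [F1 F2] [G1 G2]; split.
  - intros a b; apply exR_plus; apply exR_scal; auto.
  - intros eps He.
    set (e := eps / (2 * (Rabs c1 + Rabs c2 + 1))).
    assert (He' : 0 < e). { unfold e. apply Rdiv_lt_0_compat; auto.
      pose proof (Rabs_pos c1); pose proof (Rabs_pos c2); lra. }
    destruct (F2 e He') as [M1 [HM1 H1]]; destruct (G2 e He') as [M2 [HM2 H2]].
    exists (Rmax M1 M2); split. { apply (Rle_trans _ M1); auto; apply Rmax_l. }
    intros a b Ha Hb.
    rewrite RI_plus by (apply exR_scal; auto). rewrite !RI_scal by auto.
    assert (A1 : Rabs (RInt f a b - l1) < e).
    { apply H1. pose proof (Rmax_l M1 M2); lra. pose proof (Rmax_l M1 M2); lra. }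
    assert (A2 : Rabs (RInt g a b - l2) < e).
    { apply H2. pose proof (Rmax_r M1 M2); lra. pose proof (Rmax_r M1 M2); lra. }
    replace (c1 * RInt f a b + c2 * RInt g a b - (c1 * l1 + c2 * l2)) with
      (c1 * (RInt f a b - l1) + c2 * (RInt g a b - l2)) by ring.
    eapply Rle_lt_trans. apply Rabs_triang. rewrite !Rabs_mult.
    assert (Rabs c1 * Rabs (RInt f a b - l1) <= Rabs c1 * e) by
      (apply Rmult_le_compat_l; [apply Rabs_pos| lra]).
    assert (Rabs c2 * Rabs (RInt g a b - l2) <= Rabs c2 * e) by
      (apply Rmult_le_compat_l; [apply Rabs_pos| lra]).
    assert ((Rabs c1 + Rabs c2) * e < eps).
    { unfold e. pose proof (Rabs_pos c1); pose proof (Rabs_pos c2).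
      apply (Rmult_lt_reg_r (2 * (Rabs c1 + Rabs c2 + 1))). lra.
      field_simplify. nra. lra. }
    nra.
Qed.



Lemma imp_conv f l : improper_integral f l -> impI f l.
Proof.
  intros [H1 H2]; split.
  - intros a b; destruct (H1 a b) as [pr]; apply ex_RInt_Reals_1; exact pr.
  - intros eps He; destruct (H2 eps He) as [M [HM HH]]; exists M; split; auto.
    intros a b Ha Hb. destruct (H1 a b) as [pr]. rewrite (RInt_Reals f a b pr). auto.
Qed.

Lemma impI_sym f l : impI f l -> forall eps, 0 < eps -> exists M, forall M', M <= M' ->
  Rabs (RInt f (- M') M' - l) < eps.
Proof.
  intros [_ H] eps He; destruct (H eps He) as [M [HM HH]]; exists M; intros M' HM'.
  apply HH; lra.
Qed.

Lemma impI_tail g G : impI g G -> forall eps, 0 < eps -> exists M0, 0 <= M0 /\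
  forall M a b, M0 <= M -> a <= - M -> M <= b -> RInt g a (- M) + RInt g M b < eps.
Proof.
  intros [H1 H2] eps He. destruct (H2 (eps/2)) as [M0 [HM HH]]. lra.
  exists M0; split; auto; intros M a b HM0 Ha Hb.
  assert (E : RInt g a b = RInt g a (-M) + RInt g (-M) M + RInt g M b).
  { rewrite (RI_chasles g a (-M) M) by auto. rewrite RI_chasles; auto. }
  pose proof (HH a b ltac:(lra) ltac:(lra)). pose proof (HH (-M) M ltac:(lra) ltac:(lra)).
  rewrite E in H. apply Rabs_def2 in H. apply Rabs_def2 in H0. lra.
Qed.

Lemma le_eta (X Y : R) : (forall eta, 0 < eta -> X <= Y + eta) -> X <= Y.
Proof.
  intros H. destruct (Rle_dec X Y); auto. exfalso.
  specialize (H ((X - Y)/2) ltac:(lra)). lra.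
Qed.


Ltac rring := match goal with |- @eq _ ?a ?b => change (@eq R a b); cbv beta; ring end.

Lemma deq (f : R -> R) x l l' : is_derive f x l -> l = l' -> is_derive f x l'.
Proof. intros H ->; auto. Qed.
Lemma dplus (f g : R -> R) x df dg : is_derive f x df -> is_derive g x dg ->
  is_derive (fun t => f t + g t) x (df + dg).
Proof. intros; apply (is_derive_plus f g); auto. Qed.
Lemma dminus (f g : R -> R) x df dg : is_derive f x df -> is_derive g x dg ->
  is_derive (fun t => f t - g t) x (df - dg).
Proof. intros; apply (is_derive_minus f g); auto. Qed.
Lemma dmult (f g : R -> R) x df dg : is_derive f x df -> is_derive g x dg ->
  is_derive (fun t => f t * g t) x (df * g x + f x * dg).
Proof. intros; apply (is_derive_mult f g); auto. intros; apply Rmult_comm. Qed.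
Lemma dscal (f : R -> R) x k df : is_derive f x df -> is_derive (fun t => k * f t) x (k * df).
Proof. intros; apply is_derive_scal; auto. Qed.
Lemma dsq (f : R -> R) x df : is_derive f x df -> is_derive (fun t => f t ^ 2) x (2 * df * f x).
Proof. intros H. apply (is_derive_ext (fun t => f t * f t) (fun t => f t ^ 2)).
  intros t. rring.
  eapply deq. apply dmult; eauto. rring. Qed.

Lemma c2d_cont (f : R -> R -> R) z x : continuity_2d_pt f z x -> continuous (fun t => f z t) x.
Proof.
  intros H. apply (proj1 (continuity_pt_filterlim _ _)).
  unfold continuity_pt, continue_in, limit1_in, limit_in. intros eps Heps.
  destruct (H (mkposreal eps Heps)) as [d Hd]. exists d. split. apply cond_pos.
  intros y [_ Hy]. simpl in *.
  unfold R_dist in *. apply (Hd z y). rewrite Rminus_diag, Rabs_R0. apply cond_pos. exact Hy.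
Qed.

Lemma mvt_bound (F : R -> R) (dF : R -> R) z0 h K :
  (forall z, is_derive F z (dF z)) ->
  (forall z, Rabs (z - z0) <= Rabs h -> Rabs (dF z) <= K) ->
  Rabs (F (z0 + h) - F z0) <= K * Rabs h.
Proof.
  intros Hd Hb.
  destruct (MVT_gen F z0 (z0 + h) dF) as [c [Hc Heq]].
  - intros; auto.
  - intros x _. apply (proj2 (continuity_pt_filterlim _ _)). apply (ex_derive_continuous (K:=R_AbsRing) (V:=R_NormedModule) F). eexists; eauto.
  - rewrite Heq. replace (z0 + h - z0) with h by ring. rewrite Rabs_mult.
    apply Rmult_le_compat_r. apply Rabs_pos. apply Hb.
    unfold Rmin, Rmax in Hc; destruct (Rle_dec z0 (z0+h)); 
    unfold Rabs; repeat destruct Rcase_abs; lra.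
Qed.

Lemma RInt_abs_bound (D g : R -> R) a b k : a <= b -> ex_RInt D a b -> ex_RInt g a b ->
  (forall x, Rabs (D x) <= k * g x) -> Rabs (RInt D a b) <= k * RInt g a b.
Proof.
  intros Hab HD Hg Hb. rewrite <- RI_scal by auto.
  apply Rabs_le. split.
  - rewrite <- (Rmult_1_l (RInt (fun x => k * g x) a b)).
    replace (- (1 * RInt (fun x => k * g x) a b)) with ((-1) * RInt (fun x => k * g x) a b) by ring.
    rewrite <- RI_scal by (apply exR_scal; auto).
    apply RInt_le; auto. apply exR_scal, exR_scal; auto.
    intros x _. specialize (Hb x). apply Rabs_le_between in Hb. lra.
  - apply RInt_le; auto. apply exR_scal; auto. intros x _. specialize (Hb x).
    apply Rabs_le_between in Hb. lra.
Qed.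


Lemma deriv_under (F Fz : R -> R -> R) (I : R -> R) (L c z0 : R) :
 0 <= c ->
 (forall z x, is_derive (fun t => F t x) z (Fz z x)) ->
 (forall z x, continuity_2d_pt Fz z x) ->
 (forall z, impI (fun x => F z x) (I z)) ->
 (exists d g G, 0 < d /\ impI g G /\ forall x z, Rabs (z - z0) < d -> Rabs (Fz z x) <= c * g x) ->
 (forall eps, 0 < eps -> exists M, forall M', M <= M' -> Rabs (RInt (fun x => Fz z0 x) (- M') M' - L) < eps) ->
 derivable_pt_lim I z0 L.
Proof.
  intros Hc HFd HFc HI [d [g [G [Hd [Hg Hb]]]]] HL eps Heps.
  set (e := eps / (2 * c + 4)).
  assert (He : 0 < e) by (unfold e; apply Rdiv_lt_0_compat; lra).
  destruct (impI_tail g G Hg e He) as [Mg [HMg Htail]].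
  destruct (HL e He) as [ML HML].
  set (M := Rmax Mg ML).
  assert (HMg' : Mg <= M) by apply Rmax_l.
  assert (HML' : ML <= M) by apply Rmax_r.
  assert (HP : is_derive (fun z => RInt (fun x => F z x) (- M) M) z0 (RInt (fun x => Fz z0 x) (- M) M)).
  { assert (E : RInt (fun x => Fz z0 x) (- M) M = RInt (fun t => Derive (fun u => F u t) z0) (- M) M).
    { apply RInt_ext. intros x _. symmetry. apply is_derive_unique. apply HFd. }
    rewrite E. apply is_derive_RInt_param.
    - apply filter_forall. intros y t _. eexists; apply HFd.
    - intros t _. apply (continuity_2d_pt_ext Fz). intros u v. symmetry.
      apply is_derive_unique. apply HFd. apply HFc.
    - apply filter_forall. intros y. apply (HI y). }
  apply is_derive_Reals in HP. destruct (HP e He) as [d1 Hd1].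
  assert (Hmin : 0 < Rmin d1 d) by (apply Rmin_pos; [apply cond_pos| auto]).
  exists (mkposreal _ Hmin). intros h Hh0 Hh. simpl in Hh.
  assert (Hh1 : Rabs h < d1) by (eapply Rlt_le_trans; [exact Hh| apply Rmin_l]).
  assert (Hh2 : Rabs h < d) by (eapply Rlt_le_trans; [exact Hh| apply Rmin_r]).
  set (P := fun z => RInt (fun x => F z x) (- M) M).
  set (P' := RInt (fun x => Fz z0 x) (- M) M).
  assert (Key : Rabs ((I (z0 + h) - I z0) - (P (z0 + h) - P z0)) <= c * Rabs h * e).
  { apply le_eta. intros eta Heta.
    destruct (HI (z0 + h)) as [Ex1 H1]. destruct (HI z0) as [Ex2 H2].
    destruct (H1 (eta / 2) ltac:(lra)) as [M1 [HM1 HH1]].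
    destruct (H2 (eta / 2) ltac:(lra)) as [M2 [HM2 HH2]].
    set (A := Rmax M (Rmax M1 M2)).
    assert (HA : M <= A) by apply Rmax_l.
    assert (HA1 : M1 <= A) by (eapply Rle_trans; [apply Rmax_l| apply Rmax_r]).
    assert (HA2 : M2 <= A) by (eapply Rle_trans; [apply Rmax_r| apply Rmax_r]).
    specialize (HH1 (- A) A ltac:(lra) ltac:(lra)).
    specialize (HH2 (- A) A ltac:(lra) ltac:(lra)).
    assert (Dec : forall z, RInt (fun x => F z x) (- A) A =
       RInt (fun x => F z x) (- A) (- M) + P z + RInt (fun x => F z x) M A).
    { intros z. unfold P. rewrite RI_chasles by apply HI.
      rewrite RI_chasles by apply HI. reflexivity. }
    rewrite Dec in HH1, HH2.
    assert (Bnd : forall a b, a <= b -> Rabs (RInt (fun x => F (z0 + h) x) a b - RInt (fun x => F z0 x) a b)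
      <= c * Rabs h * RInt g a b).
    { intros a b Hab. rewrite <- RI_minus by apply HI.
      apply RInt_abs_bound; auto. apply exR_minus; apply HI. apply Hg.
      intros x. replace (c * Rabs h * g x) with ((c * g x) * Rabs h) by ring.
      apply (mvt_bound (fun t => F t x) (fun t => Fz t x)). intros; apply HFd.
      intros z Hz. apply Hb. lra. }
    pose proof (Bnd (- A) (- M) ltac:(lra)) as B1.
    pose proof (Bnd M A ltac:(lra)) as B2.
    pose proof (Htail M (- A) A HMg' ltac:(lra) ltac:(lra)) as T.
    assert (Hch : 0 <= c * Rabs h) by (apply Rmult_le_pos; auto; apply Rabs_pos).
    assert (T' : c * Rabs h * RInt g (- A) (- M) + c * Rabs h * RInt g M A <= c * Rabs h * e).
    { rewrite <- Rmult_plus_distr_l. apply Rmult_le_compat_l; auto; lra. }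
    apply Rabs_def2 in HH1. apply Rabs_def2 in HH2.
    apply Rabs_le_between in B1. apply Rabs_le_between in B2.
    apply Rabs_le. split; lra. }
  specialize (Hd1 h Hh0 Hh1). fold P in Hd1. fold P'.
  specialize (HML M HML').
  assert (Ehh : 0 < Rabs h) by (apply Rabs_pos_lt; auto).
  replace ((I (z0 + h) - I z0) / h - L) with
    (((P (z0 + h) - P z0) / h - P') + ((I (z0 + h) - I z0) - (P (z0 + h) - P z0)) / h + (P' - L))
    by (field; auto).
  assert (Q : Rabs (((I (z0 + h) - I z0) - (P (z0 + h) - P z0)) / h) <= c * e).
  { unfold Rdiv. rewrite Rabs_mult, Rabs_inv.
    apply (Rmult_le_reg_r (Rabs h)); auto.
    rewrite Rmult_assoc, Rinv_l by lra. nra. }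
  assert (Hce : e + c * e + e <= eps).
  { unfold e. apply (Rmult_le_reg_r (2 * c + 4)). lra. field_simplify; nra. }
  eapply Rle_lt_trans. apply Rabs_triang.
  eapply Rle_lt_trans. apply Rplus_le_compat_r. apply Rabs_triang.
  unfold P, P' in *. lra.
Qed.


Definition vanish (u : R -> R) : Prop :=
  forall eps, 0 < eps -> exists M, forall x, M < Rabs x -> Rabs (u x) < eps.

Lemma limit_part (Fz h B Bx : R -> R) (H : R) :
 (forall x, Fz x = h x + Bx x) ->
 (forall x, is_derive B x (Bx x)) -> (forall x, continuous Bx x) ->
 impI h H -> vanish B ->
 forall eps, 0 < eps -> exists M, forall M', M <= M' -> Rabs (RInt Fz (- M') M' - H) < eps.
Proof.
  intros E HB HBc Hh Hv eps Heps.
  destruct (impI_sym h H Hh (eps/2) ltac:(lra)) as [M1 HM1].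
  destruct (Hv (eps/4) ltac:(lra)) as [Mv HMv].
  exists (Rmax M1 (Rabs Mv + 1)). intros M' HM'.
  pose proof (Rmax_l M1 (Rabs Mv + 1)). pose proof (Rmax_r M1 (Rabs Mv + 1)).
  pose proof (Rle_abs Mv). pose proof (Rabs_pos Mv).
  rewrite (RInt_ext Fz (fun x => h x + Bx x)) by (intros; apply E).
  assert (HexB : ex_RInt Bx (- M') M').
  { apply (ex_RInt_continuous (V:=R_CompleteNormedModule) Bx). intros; apply HBc. }
  rewrite RI_plus by (auto; apply Hh).
  assert (EB : RInt Bx (- M') M' = B M' - B (- M')).
  { apply is_RInt_unique. apply (is_RInt_derive B Bx). intros; apply HB. intros; apply HBc. }
  rewrite EB.
  specialize (HM1 M' ltac:(lra)).
  assert (V1 : Rabs (B M') < eps/4). { apply HMv. rewrite Rabs_right; lra. }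
  assert (V2 : Rabs (B (- M')) < eps/4). { apply HMv. rewrite Rabs_left; lra. }
  apply Rabs_def2 in HM1. apply Rabs_def2 in V1. apply Rabs_def2 in V2.
  apply Rabs_def1; lra.
Qed.

Lemma vanish_plus u v : vanish u -> vanish v -> vanish (fun x => u x + v x).
Proof.
  intros Hu Hv eps He. destruct (Hu (eps/2) ltac:(lra)) as [M1 H1].
  destruct (Hv (eps/2) ltac:(lra)) as [M2 H2]. exists (Rmax M1 M2). intros x Hx.
  pose proof (Rmax_l M1 M2). pose proof (Rmax_r M1 M2).
  eapply Rle_lt_trans. apply Rabs_triang.
  pose proof (H1 x ltac:(lra)). pose proof (H2 x ltac:(lra)). lra.
Qed.
Lemma vanish_opp u : vanish u -> vanish (fun x => - u x).
Proof. intros Hu eps He. destruct (Hu eps He) as [M H]. exists M. intros. rewrite Rabs_Ropp. auto. Qed.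
Lemma vanish_minus u v : vanish u -> vanish v -> vanish (fun x => u x - v x).
Proof. intros. apply vanish_plus; auto. apply vanish_opp; auto. Qed.
Lemma vanish_mult u v : vanish u -> vanish v -> vanish (fun x => u x * v x).
Proof.
  intros Hu Hv eps He. destruct (Hu eps He) as [M1 H1].
  destruct (Hv 1 ltac:(lra)) as [M2 H2]. exists (Rmax M1 M2). intros x Hx.
  pose proof (Rmax_l M1 M2). pose proof (Rmax_r M1 M2).
  rewrite Rabs_mult. pose proof (H1 x ltac:(lra)). pose proof (H2 x ltac:(lra)).
  pose proof (Rabs_pos (u x)). pose proof (Rabs_pos (v x)). nra.
Qed.
Lemma vanish_scal k u : vanish u -> vanish (fun x => k * u x).
Proof.
  intros Hu eps He. destruct (Hu (eps / (Rabs k + 1))) as [M H].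
  apply Rdiv_lt_0_compat; auto. pose proof (Rabs_pos k); lra.
  exists M. intros x Hx. rewrite Rabs_mult. specialize (H x Hx).
  pose proof (Rabs_pos k). pose proof (Rabs_pos (u x)).
  assert (eps / (Rabs k + 1) * (Rabs k + 1) = eps) by (field; lra).
  nra.
Qed.

Lemma Re_le c : Rabs (Re c) <= Cabs c.
Proof.
  unfold Cabs. rewrite <- (sqrt_pow2 (Rabs (Re c))) by apply Rabs_pos. apply sqrt_le_1_alt.
  rewrite pow2_abs. pose proof (pow2_ge_0 (Im c)). lra.
Qed.
Lemma Im_le c : Rabs (Im c) <= Cabs c.
Proof.
  unfold Cabs. rewrite <- (sqrt_pow2 (Rabs (Im c))) by apply Rabs_pos. apply sqrt_le_1_alt.
  rewrite pow2_abs. pose proof (pow2_ge_0 (Re c)). lra.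
Qed.
Lemma vanish_Re f : vanishes_at_infty f -> vanish (fun x => Re (f x)).
Proof. intros H eps He. destruct (H eps He) as [M HM]. exists M. intros x Hx.
  eapply Rle_lt_trans. apply Re_le. auto. Qed.
Lemma vanish_Im f : vanishes_at_infty f -> vanish (fun x => Im (f x)).
Proof. intros H eps He. destruct (H eps He) as [M HM]. exists M. intros x Hx.
  eapply Rle_lt_trans. apply Im_le. auto. Qed.

Lemma CS p1 p2 q1 q2 : Rabs (p1 * q1 + p2 * q2) <= sqrt (p1 ^ 2 + p2 ^ 2) * sqrt (q1 ^ 2 + q2 ^ 2).
Proof.
  rewrite <- sqrt_mult by (apply Rplus_le_le_0_compat; apply pow2_ge_0).
  rewrite <- (sqrt_pow2 (Rabs (p1 * q1 + p2 * q2))) by apply Rabs_pos. apply sqrt_le_1_alt.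
  rewrite pow2_abs.
  assert (0 <= (p1 * q2 - p2 * q1) ^ 2) by apply pow2_ge_0. nra.
Qed.


Lemma S_deriv (F Fz : R -> R -> R) (I : R -> R) (Hv : R) (h B Bx : R -> R) z0 :
 (forall z x, is_derive (fun t => F t x) z (Fz z x)) ->
 (forall z x, continuity_2d_pt Fz z x) ->
 (forall z, impI (fun x => F z x) (I z)) ->
 (exists d g G, 0 < d /\ impI g G /\ forall x z, Rabs (z - z0) < d -> Rabs (Fz z x) <= 4 * g x) ->
 (forall x, Fz z0 x = h x + Bx x) ->
 (forall x, is_derive B x (Bx x)) -> (forall x, continuous Bx x) ->
 impI h Hv -> vanish B ->
 derivable_pt_lim I z0 Hv.
Proof.
  intros. apply (deriv_under F Fz I Hv 4 z0); auto. lra.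
  apply (limit_part (fun x => Fz z0 x) h B Bx); auto.
Qed.

Lemma CSp p1 p2 q1 q2 : Rabs (p1 * q1 + p2 * q2) <= sqrt (p1 ^ 2 + p2 ^ 2) * sqrt (q1 ^ 2 + q2 ^ 2).
Proof. apply CS. Qed.
Lemma CSm p1 p2 q1 q2 : Rabs (p1 * q2 - p2 * q1) <= sqrt (p1 ^ 2 + p2 ^ 2) * sqrt (q1 ^ 2 + q2 ^ 2).
Proof.
  replace (p1 * q2 - p2 * q1) with (p1 * q2 + p2 * (- q1)) by ring.
  replace (q1 ^ 2 + q2 ^ 2) with (q2 ^ 2 + (- q1) ^ 2) by ring. apply CS.
Qed.

Lemma dom2 (X Y g : R) : Rabs X <= g -> Rabs Y <= g ->
  Rabs (2 * (X + Y)) <= 4 * g /\ Rabs (2 * (X - Y)) <= 4 * g.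
Proof.
  intros HX HY. assert (E2 : Rabs 2 = 2) by (apply Rabs_right; lra). rewrite !Rabs_mult, !E2.
  pose proof (Rabs_triang X Y). pose proof (Rabs_triang X (- Y)). rewrite Rabs_Ropp in H0.
  unfold Rminus. split; lra.
Qed.

Ltac dtac := repeat match goal with
  | |- is_derive (fun t => _ + _) _ _ => apply dplus
  | |- is_derive (fun t => _ - _) _ _ => apply dminus
  | |- is_derive (fun t => _ ^ 2) _ _ => apply dsq
  | |- is_derive (fun t => ?k * _) _ _ => apply dscal
  | |- is_derive (fun t => _ * _) _ _ => apply dmult
  | H : forall x z, is_derive _ _ _ |- _ => apply H
  end.
Ltac ctac := repeat match goal with
  | |- continuity_2d_pt (fun u v => _ + _) _ _ => apply continuity_2d_pt_plus
  | |- continuity_2d_pt (fun u v => _ - _) _ _ => apply continuity_2d_pt_minus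
  | |- continuity_2d_pt (fun u v => ?c) _ _ => apply continuity_2d_pt_const
  | |- continuity_2d_pt (fun u v => _ * _) _ _ => apply continuity_2d_pt_mult
  | H : forall z x, continuity_2d_pt _ _ _ |- _ => apply H
  end.
Ltac vtac := repeat match goal with
  | |- vanish (fun x => _ + _) => apply vanish_plus
  | |- vanish (fun x => _ - _) => apply vanish_minus
  | |- vanish (fun x => ?k * _) => apply vanish_scal
  | |- vanish (fun x => _ * _) => apply vanish_mult
  | H : forall z, vanish _ |- _ => apply H
  end.

Lemma impI_val f l l' : impI f l -> l = l' -> impI f l'.
Proof. intros H ->; auto. Qed.
Lemma impI_scal f l k : impI f l -> impI (fun x => k * f x) (k * l).
Proof.
  intros H. eapply impI_val. eapply impI_ext; [| apply (impI_lin f f l l k 0 H H)].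
  intros x; simpl; ring. ring.
Qed.


Lemma comp_main (kap gam : R)
  (a1 a2 b1 b2 a1x a2x b1x b2x a1xx a2xx b1xx b2xx a1z a2z b1z b2z N : R -> R -> R)
  (S0 S1 S2 S3 : R -> R)
  (Dx1 : forall x z, is_derive (fun t => a1 t z) x (a1x x z))
  (Dx2 : forall x z, is_derive (fun t => a2 t z) x (a2x x z))
  (Dx3 : forall x z, is_derive (fun t => b1 t z) x (b1x x z))
  (Dx4 : forall x z, is_derive (fun t => b2 t z) x (b2x x z))
  (Dxx1 : forall x z, is_derive (fun t => a1x t z) x (a1xx x z))
  (Dxx2 : forall x z, is_derive (fun t => a2x t z) x (a2xx x z))
  (Dxx3 : forall x z, is_derive (fun t => b1x t z) x (b1xx x z))
  (Dxx4 : forall x z, is_derive (fun t => b2x t z) x (b2xx x z))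
  (Dz1 : forall x z, is_derive (fun t => a1 x t) z (a1z x z))
  (Dz2 : forall x z, is_derive (fun t => a2 x t) z (a2z x z))
  (Dz3 : forall x z, is_derive (fun t => b1 x t) z (b1z x z))
  (Dz4 : forall x z, is_derive (fun t => b2 x t) z (b2z x z))
  (C1 : forall z x, continuity_2d_pt (fun z x => a1 x z) z x)
  (C2 : forall z x, continuity_2d_pt (fun z x => a2 x z) z x)
  (C3 : forall z x, continuity_2d_pt (fun z x => b1 x z) z x)
  (C4 : forall z x, continuity_2d_pt (fun z x => b2 x z) z x)
  (Cx1 : forall z x, continuity_2d_pt (fun z x => a1x x z) z x)
  (Cx2 : forall z x, continuity_2d_pt (fun z x => a2x x z) z x)
  (Cx3 : forall z x, continuity_2d_pt (fun z x => b1x x z) z x)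
  (Cx4 : forall z x, continuity_2d_pt (fun z x => b2x x z) z x)
  (Cxx1 : forall z x, continuity_2d_pt (fun z x => a1xx x z) z x)
  (Cxx2 : forall z x, continuity_2d_pt (fun z x => a2xx x z) z x)
  (Cxx3 : forall z x, continuity_2d_pt (fun z x => b1xx x z) z x)
  (Cxx4 : forall z x, continuity_2d_pt (fun z x => b2xx x z) z x)
  (Cz1 : forall z x, continuity_2d_pt (fun z x => a1z x z) z x)
  (Cz2 : forall z x, continuity_2d_pt (fun z x => a2z x z) z x)
  (Cz3 : forall z x, continuity_2d_pt (fun z x => b1z x z) z x)
  (Cz4 : forall z x, continuity_2d_pt (fun z x => b2z x z) z x)
  (E1 : forall x z, a1z x z = - a2xx x z - kap * b2 x z + gam * a1 x z + N x z * a2 x z)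
  (E2 : forall x z, a2z x z = a1xx x z + kap * b1 x z + gam * a2 x z - N x z * a1 x z)
  (E3 : forall x z, b1z x z = - b2xx x z - kap * a2 x z - gam * b1 x z + N x z * b2 x z)
  (E4 : forall x z, b2z x z = b1xx x z + kap * a1 x z - gam * b2 x z - N x z * b1 x z)
  (V1 : forall z, vanish (fun x => a1 x z)) (V2 : forall z, vanish (fun x => a2 x z))
  (V3 : forall z, vanish (fun x => b1 x z)) (V4 : forall z, vanish (fun x => b2 x z))
  (Vx1 : forall z, vanish (fun x => a1x x z)) (Vx2 : forall z, vanish (fun x => a2x x z))
  (Vx3 : forall z, vanish (fun x => b1x x z)) (Vx4 : forall z, vanish (fun x => b2x x z))
  (Dom : forall z0, exists d g G, 0 < d /\ impI g G /\ forall x z, Rabs (z - z0) < d ->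
     sqrt (a1 x z ^ 2 + a2 x z ^ 2) * sqrt (a1z x z ^ 2 + a2z x z ^ 2) <= g x /\
     sqrt (a1 x z ^ 2 + a2 x z ^ 2) * sqrt (b1z x z ^ 2 + b2z x z ^ 2) <= g x /\
     sqrt (b1 x z ^ 2 + b2 x z ^ 2) * sqrt (a1z x z ^ 2 + a2z x z ^ 2) <= g x /\
     sqrt (b1 x z ^ 2 + b2 x z ^ 2) * sqrt (b1z x z ^ 2 + b2z x z ^ 2) <= g x)
  (HS0 : forall z, impI (fun x => a1 x z ^ 2 + a2 x z ^ 2 + b1 x z ^ 2 + b2 x z ^ 2) (S0 z))
  (HS1 : forall z, impI (fun x => 2 * (a1 x z * b1 x z + a2 x z * b2 x z)) (S1 z))
  (HS2 : forall z, impI (fun x => 2 * (a2 x z * b1 x z - a1 x z * b2 x z)) (S2 z))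
  (HS3 : forall z, impI (fun x => a1 x z ^ 2 + a2 x z ^ 2 - b1 x z ^ 2 - b2 x z ^ 2) (S3 z)) :
  (forall z, derivable_pt_lim S0 z (2 * gam * S3 z)) /\
  (forall z, derivable_pt_lim S1 z 0) /\
  (forall z, derivable_pt_lim S2 z (- 2 * kap * S3 z)) /\
  (forall z, derivable_pt_lim S3 z (2 * gam * S0 z + 2 * kap * S2 z)).
Proof.
  Opaque is_derive continuity_2d_pt vanish impI.
  split; [| split; [| split]]; intros z0.
  - apply (S_deriv (fun z x => a1 x z ^ 2 + a2 x z ^ 2 + b1 x z ^ 2 + b2 x z ^ 2)
      (fun z x => 2 * ((a1 x z * a1z x z + a2 x z * a2z x z) + (b1 x z * b1z x z + b2 x z * b2z x z)))
      S0 (2 * gam * S3 z0)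
      (fun x => 2 * gam * (a1 x z0 ^ 2 + a2 x z0 ^ 2 - b1 x z0 ^ 2 - b2 x z0 ^ 2))
      (fun x => 2 * (a2 x z0 * a1x x z0 - a1 x z0 * a2x x z0 + (b2 x z0 * b1x x z0 - b1 x z0 * b2x x z0)))
      (fun x => 2 * (a2 x z0 * a1xx x z0 - a1 x z0 * a2xx x z0 + (b2 x z0 * b1xx x z0 - b1 x z0 * b2xx x z0)))).
    + intros z x. cbv beta. eapply deq. dtac. rring.
    + intros z x. ctac.
    + exact HS0.
    + destruct (Dom z0) as [d [g [G [Hd [Hg Hb]]]]]. exists d, g, G. split; [auto| split; [auto|]].
      intros x z Hz. destruct (Hb x z Hz) as [h11 [h12 [h21 h22]]].
      apply dom2; (eapply Rle_trans; [apply CSp| auto]).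
    + intros x. cbv beta. rewrite E1, E2, E3, E4. rring.
    + intros x. cbv beta. eapply deq. dtac. rring.
    + intros x. apply (c2d_cont (fun z x => 2 * (a2 x z * a1xx x z - a1 x z * a2xx x z + (b2 x z * b1xx x z - b1 x z * b2xx x z)))). ctac.
    + apply impI_scal. apply HS3.
    + vtac.
  - apply (S_deriv (fun z x => 2 * (a1 x z * b1 x z + a2 x z * b2 x z))
      (fun z x => 2 * ((b1 x z * a1z x z + b2 x z * a2z x z) + (a1 x z * b1z x z + a2 x z * b2z x z)))
      S1 0
      (fun x => 0 * (a1 x z0 ^ 2 + a2 x z0 ^ 2 + b1 x z0 ^ 2 + b2 x z0 ^ 2))
      (fun x => 2 * (a2 x z0 * b1x x z0 - a2x x z0 * b1 x z0 + (a1x x z0 * b2 x z0 - a1 x z0 * b2x x z0)))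
      (fun x => 2 * (a2 x z0 * b1xx x z0 - a2xx x z0 * b1 x z0 + (a1xx x z0 * b2 x z0 - a1 x z0 * b2xx x z0)))).
    + intros z x. cbv beta. eapply deq. dtac. rring.
    + intros z x. ctac.
    + exact HS1.
    + destruct (Dom z0) as [d [g [G [Hd [Hg Hb]]]]]. exists d, g, G. split; [auto| split; [auto|]].
      intros x z Hz. destruct (Hb x z Hz) as [h11 [h12 [h21 h22]]].
      apply dom2; (eapply Rle_trans; [apply CSp| auto]).
    + intros x. cbv beta. rewrite E1, E2, E3, E4. rring.
    + intros x. cbv beta. eapply deq. dtac. rring.
    + intros x. apply (c2d_cont (fun z x => 2 * (a2 x z * b1xx x z - a2xx x z * b1 x z + (a1xx x z * b2 x z - a1 x z * b2xx x z)))). ctac.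
    + eapply impI_val. apply impI_scal. apply HS0. ring.
    + vtac.
  - apply (S_deriv (fun z x => 2 * (a2 x z * b1 x z - a1 x z * b2 x z))
      (fun z x => 2 * ((b1 x z * a2z x z - b2 x z * a1z x z) - (a1 x z * b2z x z - a2 x z * b1z x z)))
      S2 (- 2 * kap * S3 z0)
      (fun x => - 2 * kap * (a1 x z0 ^ 2 + a2 x z0 ^ 2 - b1 x z0 ^ 2 - b2 x z0 ^ 2))
      (fun x => 2 * (a1x x z0 * b1 x z0 - a1 x z0 * b1x x z0 + (a2x x z0 * b2 x z0 - a2 x z0 * b2x x z0)))
      (fun x => 2 * (a1xx x z0 * b1 x z0 - a1 x z0 * b1xx x z0 + (a2xx x z0 * b2 x z0 - a2 x z0 * b2xx x z0)))).
    + intros z x. cbv beta. eapply deq. dtac. rring.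
    + intros z x. ctac.
    + exact HS2.
    + destruct (Dom z0) as [d [g [G [Hd [Hg Hb]]]]]. exists d, g, G. split; [auto| split; [auto|]].
      intros x z Hz. destruct (Hb x z Hz) as [h11 [h12 [h21 h22]]].
      apply dom2; (eapply Rle_trans; [apply CSm| auto]).
    + intros x. cbv beta. rewrite E1, E2, E3, E4. rring.
    + intros x. cbv beta. eapply deq. dtac. rring.
    + intros x. apply (c2d_cont (fun z x => 2 * (a1xx x z * b1 x z - a1 x z * b1xx x z + (a2xx x z * b2 x z - a2 x z * b2xx x z)))). ctac.
    + apply impI_scal. apply HS3.
    + vtac.
  - apply (S_deriv (fun z x => a1 x z ^ 2 + a2 x z ^ 2 - b1 x z ^ 2 - b2 x z ^ 2)
      (fun z x => 2 * ((a1 x z * a1z x z + a2 x z * a2z x z) - (b1 x z * b1z x z + b2 x z * b2z x z)))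
      S3 (2 * gam * S0 z0 + 2 * kap * S2 z0)
      (fun x => 2 * gam * (a1 x z0 ^ 2 + a2 x z0 ^ 2 + b1 x z0 ^ 2 + b2 x z0 ^ 2)
                + 2 * kap * (2 * (a2 x z0 * b1 x z0 - a1 x z0 * b2 x z0)))
      (fun x => 2 * (a2 x z0 * a1x x z0 - a1 x z0 * a2x x z0 - (b2 x z0 * b1x x z0 - b1 x z0 * b2x x z0)))
      (fun x => 2 * (a2 x z0 * a1xx x z0 - a1 x z0 * a2xx x z0 - (b2 x z0 * b1xx x z0 - b1 x z0 * b2xx x z0)))).
    + intros z x. cbv beta. eapply deq. dtac. rring.
    + intros z x. ctac.
    + exact HS3.
    + destruct (Dom z0) as [d [g [G [Hd [Hg Hb]]]]]. exists d, g, G. split; [auto| split; [auto|]].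
      intros x z Hz. destruct (Hb x z Hz) as [h11 [h12 [h21 h22]]].
      apply dom2; (eapply Rle_trans; [apply CSp| auto]).
    + intros x. cbv beta. rewrite E1, E2, E3, E4. rring.
    + intros x. cbv beta. eapply deq. dtac. rring.
    + intros x. apply (c2d_cont (fun z x => 2 * (a2 x z * a1xx x z - a1 x z * a2xx x z - (b2 x z * b1xx x z - b1 x z * b2xx x z)))). ctac.
    + apply impI_lin; auto.
    + vtac.
Qed.


Lemma const_d0 (f : R -> R) : (forall z, is_derive f z 0) -> forall z, f z = f 0.
Proof.
  intros H z. destruct (MVT_gen f 0 z (fun _ => 0)) as [c [_ Hc]].
  - intros; auto.
  - intros x _. apply (proj2 (continuity_pt_filterlim _ _)).
    apply (ex_derive_continuous (K:=R_AbsRing) (V:=R_NormedModule) f). eexists; eauto.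
  - lra.
Qed.

Lemma dcos k z : is_derive (fun t => cos (k * t)) z (- (k * sin (k * z))).
Proof. auto_derive; auto. ring. Qed.
Lemma dsin k z : is_derive (fun t => sin (k * t)) z (k * cos (k * z)).
Proof. auto_derive; auto. ring. Qed.

Lemma dconst (c z : R) : is_derive (fun _ => c) z 0.
Proof. apply (is_derive_const c z). Qed.

Transparent is_derive continuity_2d_pt vanish impI.

Lemma ode_part (kap gam : R) (S0 S1 S2 S3 : R -> R) (Hkg : 0 <= gam < kap)
  (D0 : forall z, derivable_pt_lim S0 z (2 * gam * S3 z))
  (D1 : forall z, derivable_pt_lim S1 z 0)
  (D2 : forall z, derivable_pt_lim S2 z (- 2 * kap * S3 z))
  (D3 : forall z, derivable_pt_lim S3 z (2 * gam * S0 z + 2 * kap * S2 z)) :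
  (forall z, S1 z = S1 0) /\
  (forall z, kap * S0 z + gam * S2 z = kap * S0 0 + gam * S2 0) /\
  (let C := kap * S0 0 + gam * S2 0 in
   let omega := sqrt (kap ^ 2 - gam ^ 2) in
   exists A1 A2, forall z,
     S0 z = kap * C / omega ^ 2 + A1 * cos (2 * omega * z) + A2 * sin (2 * omega * z)) /\
  (exists B, forall z, Rabs (S0 z) <= B).
Proof.
  assert (I0 : forall z, is_derive S0 z (2 * gam * S3 z)) by (intros; apply is_derive_Reals; auto).
  assert (I1 : forall z, is_derive S1 z 0) by (intros; apply is_derive_Reals; auto).
  assert (I2 : forall z, is_derive S2 z (- 2 * kap * S3 z)) by (intros; apply is_derive_Reals; auto).
  assert (I3 : forall z, is_derive S3 z (2 * gam * S0 z + 2 * kap * S2 z)) by (intros; apply is_derive_Reals; auto).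
  assert (Hcons : forall z, kap * S0 z + gam * S2 z = kap * S0 0 + gam * S2 0).
  { apply (const_d0 (fun z => kap * S0 z + gam * S2 z)). intros z.
    eapply deq. apply dplus; apply dscal; eauto. rring. }
  set (C := kap * S0 0 + gam * S2 0) in *.
  set (om := sqrt (kap ^ 2 - gam ^ 2)).
  assert (Hpos : 0 < kap ^ 2 - gam ^ 2) by nra.
  assert (Hom : 0 < om) by (apply sqrt_lt_R0; auto).
  assert (Hom2 : om * om = kap ^ 2 - gam ^ 2) by (apply sqrt_sqrt; lra).
  set (K := kap * C / om ^ 2).
  assert (HK : K * (om * om) = kap * C). { unfold K. field. lra. }
  set (A1 := S0 0 - K).
  set (A2 := gam * S3 0 / om).
  set (v := fun z => S0 z - K - A1 * cos (2 * om * z) - A2 * sin (2 * om * z)).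
  set (w := fun z => 2 * gam * S3 z + 2 * om * A1 * sin (2 * om * z) - 2 * om * A2 * cos (2 * om * z)).
  assert (HW : forall z, (fun z => 4 * (om * om) * v z ^ 2 + w z ^ 2) z = (fun z => 4 * (om * om) * v z ^ 2 + w z ^ 2) 0).
  { apply const_d0. intros z. unfold v, w. eapply deq.
    - cbv beta. Opaque is_derive. repeat match goal with
       | |- is_derive (fun t => ?c) _ _ => apply dconst
       | |- is_derive (fun t => _ + _) _ _ => apply dplus
       | |- is_derive (fun t => _ - _) _ _ => apply dminus
       | |- is_derive (fun t => _ ^ 2) _ _ => apply dsq
       | |- is_derive (fun t => cos (?k * t)) _ _ => apply dcos
       | |- is_derive (fun t => sin (?k * t)) _ _ => apply dsin
       | |- is_derive (fun t => ?k * _) _ _ => apply dscal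
       | |- is_derive (fun t => S0 t) _ _ => apply I0
       | |- is_derive (fun t => S3 t) _ _ => apply I3
       | |- is_derive S0 _ _ => apply I0
       | |- is_derive S3 _ _ => apply I3
       end.
    - transitivity (2 * w z * (4 * S0 z * (om * om - (kap ^ 2 - gam ^ 2)) - 4 * (K * (om * om) - kap * C)
         + 4 * kap * (gam * S2 z - (C - kap * S0 z)))).
      + unfold w. rring.
      + rewrite HK, Hom2. replace (gam * S2 z) with (C - kap * S0 z) by (rewrite <- (Hcons z); rring). rring. }
  assert (HW0 : 4 * (om * om) * v 0 ^ 2 + w 0 ^ 2 = 0).
  { unfold v, w. rewrite Rmult_0_r, cos_0, sin_0. unfold A1, A2. field. lra. }
  assert (Hv : forall z, v z = 0).
  { intros z. specialize (HW z). cbv beta in HW. rewrite HW0 in HW.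
    assert (0 < om * om) by nra. pose proof (pow2_ge_0 (w z)). pose proof (pow2_ge_0 (v z)).
    assert (E0 : v z * v z = 0) by nra. apply Rmult_integral in E0. destruct E0; auto. }
  split; [| split; [| split]].
  - apply const_d0. auto.
  - exact Hcons.
  - cbv zeta. fold C. fold om. fold K. exists A1, A2. intros z. specialize (Hv z). unfold v in Hv. lra.
  - exists (Rabs K + Rabs A1 + Rabs A2). intros z. specialize (Hv z). unfold v in Hv.
    replace (S0 z) with (K + A1 * cos (2 * om * z) + A2 * sin (2 * om * z)) by lra.
    pose proof (COS_bound (2 * om * z)). pose proof (SIN_bound (2 * om * z)).
    assert (Rabs (cos (2 * om * z)) <= 1) by (apply Rabs_le; lra).
    assert (Rabs (sin (2 * om * z)) <= 1) by (apply Rabs_le; lra).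
    eapply Rle_trans. apply Rabs_triang. eapply Rle_trans. apply Rplus_le_compat_r. apply Rabs_triang.
    rewrite !Rabs_mult.
    pose proof (Rabs_pos A1). pose proof (Rabs_pos A2). nra.
Qed.


Transparent is_derive continuity_2d_pt vanish impI.

Lemma Cabs2 c : Cabs c ^ 2 = Re c ^ 2 + Im c ^ 2.
Proof. unfold Cabs. apply pow2_sqrt. pose proof (pow2_ge_0 (Re c)); pose proof (pow2_ge_0 (Im c)); lra. Qed.

Lemma jc_Re f : jcont f -> forall z x, continuity_2d_pt (fun z x => Re (f x z)) z x.
Proof.
  intros J z0 x0 eps. destruct (J x0 z0 eps (cond_pos eps)) as [d [Hd H]].
  exists (mkposreal d Hd). intros u v Hu Hv. simpl in *.
  eapply Rle_lt_trans; [| apply (H v u Hv Hu)].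
  replace (Re (f v u) - Re (f x0 z0)) with (Re (Csub (f v u) (f x0 z0))) by (unfold Csub, Cadd, Copp; simpl; ring).
  apply Re_le.
Qed.
Lemma jc_Im f : jcont f -> forall z x, continuity_2d_pt (fun z x => Im (f x z)) z x.
Proof.
  intros J z0 x0 eps. destruct (J x0 z0 eps (cond_pos eps)) as [d [Hd H]].
  exists (mkposreal d Hd). intros u v Hu Hv. simpl in *.
  eapply Rle_lt_trans; [| apply (H v u Hv Hu)].
  replace (Im (f v u) - Im (f x0 z0)) with (Im (Csub (f v u) (f x0 z0))) by (unfold Csub, Cadd, Copp; simpl; ring).
  apply Im_le.
Qed.

Lemma dx_Re f f' : pderiv_x f f' -> forall x z, is_derive (fun t => Re (f t z)) x (Re (f' x z)).
Proof. intros H x z. apply is_derive_Reals. apply H. Qed.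
Lemma dx_Im f f' : pderiv_x f f' -> forall x z, is_derive (fun t => Im (f t z)) x (Im (f' x z)).
Proof. intros H x z. apply is_derive_Reals. apply H. Qed.
Lemma dz_Re f f' : pderiv_z f f' -> forall x z, is_derive (fun t => Re (f x t)) z (Re (f' x z)).
Proof. intros H x z. apply is_derive_Reals. apply H. Qed.
Lemma dz_Im f f' : pderiv_z f f' -> forall x z, is_derive (fun t => Im (f x t)) z (Im (f' x z)).
Proof. intros H x z. apply is_derive_Reals. apply H. Qed.


Theorem mainTheorem7
  (kappa gamma chi : R) (Hkg : 0 <= gamma < kappa)
  (psi1 psi2 psi1x psi2x psi1xx psi2xx psi1z psi2z : R -> R -> cplx)
  (* regularity: partial derivatives exist and are jointly continuous *)
  (Hd1x : pderiv_x psi1 psi1x) (Hd2x : pderiv_x psi2 psi2x)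
  (Hd1xx : pderiv_x psi1x psi1xx) (Hd2xx : pderiv_x psi2x psi2xx)
  (Hd1z : pderiv_z psi1 psi1z) (Hd2z : pderiv_z psi2 psi2z)
  (Hc : jcont psi1 /\ jcont psi2 /\ jcont psi1x /\ jcont psi2x /\
        jcont psi1xx /\ jcont psi2xx /\ jcont psi1z /\ jcont psi2z)
  (* the coupled NLS system *)
  (Heq1 : forall x z,
     Cmul Ci (psi1z x z) =
     Cadd (Cadd (Cadd (Copp (psi1xx x z)) (Cscal (- kappa) (psi2 x z)))
                (Cmul Ci (Cscal gamma (psi1 x z))))
          (Cscal (chi * (Cabs (psi1 x z) ^ 2 + Cabs (psi2 x z) ^ 2)) (psi1 x z)))
  (Heq2 : forall x z,
     Cmul Ci (psi2z x z) =
     Cadd (Cadd (Cadd (Copp (psi2xx x z)) (Cscal (- kappa) (psi1 x z)))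
                (Copp (Cmul Ci (Cscal gamma (psi2 x z)))))
          (Cscal (chi * (Cabs (psi1 x z) ^ 2 + Cabs (psi2 x z) ^ 2)) (psi2 x z)))
  (* decay: psi_j and psi_{j,x} vanish as |x| -> oo (boundary terms vanish) *)
  (Hdec : forall z,
     vanishes_at_infty (fun x => psi1 x z) /\ vanishes_at_infty (fun x => psi2 x z) /\
     vanishes_at_infty (fun x => psi1x x z) /\ vanishes_at_infty (fun x => psi2x x z))
  (* decay: products psi_j * psi_{k,z} dominated, locally uniformly in z,
     by an integrable function (justifies differentiating under the integral) *)
  (Hdom : forall z0, exists d g G, 0 < d /\ improper_integral g G /\
     forall x z, Rabs (z - z0) < d ->
       Cabs (psi1 x z) * Cabs (psi1z x z) <= g x /\
       Cabs (psi1 x z) * Cabs (psi2z x z) <= g x /\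
       Cabs (psi2 x z) * Cabs (psi1z x z) <= g x /\
       Cabs (psi2 x z) * Cabs (psi2z x z) <= g x)
  (* the integrals S_0, ..., S_3 are finite, with values S0 z, ..., S3 z *)
  (S0 S1 S2 S3 : R -> R)
  (HS0 : forall z, improper_integral
           (fun x => Cabs (psi1 x z) ^ 2 + Cabs (psi2 x z) ^ 2) (S0 z))
  (HS1 : forall z, cintegral
           (fun x => Cadd (Cmul (Cconj (psi1 x z)) (psi2 x z))
                          (Cmul (Cconj (psi2 x z)) (psi1 x z))) (RtoC (S1 z)))
  (HS2 : forall z, exists L, cintegral
           (fun x => Csub (Cmul (Cconj (psi1 x z)) (psi2 x z))
                          (Cmul (Cconj (psi2 x z)) (psi1 x z))) L /\
           RtoC (S2 z) = Cmul Ci L)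
  (HS3 : forall z, improper_integral
           (fun x => Cabs (psi1 x z) ^ 2 - Cabs (psi2 x z) ^ 2) (S3 z)) :
  (forall z, derivable_pt_lim S0 z (2 * gamma * S3 z)) /\
  (forall z, derivable_pt_lim S1 z 0) /\
  (forall z, derivable_pt_lim S2 z (- 2 * kappa * S3 z)) /\
  (forall z, derivable_pt_lim S3 z (2 * gamma * S0 z + 2 * kappa * S2 z)) /\
  (forall z, S1 z = S1 0) /\
  (forall z, kappa * S0 z + gamma * S2 z = kappa * S0 0 + gamma * S2 0) /\
  (let C := kappa * S0 0 + gamma * S2 0 in
   let omega := sqrt (kappa ^ 2 - gamma ^ 2) in
   exists A1 A2, forall z,
     S0 z = kappa * C / omega ^ 2 + A1 * cos (2 * omega * z) + A2 * sin (2 * omega * z)) /\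
  (exists B, forall z, Rabs (S0 z) <= B).
Proof.
  destruct Hc as [Cp1 [Cp2 [Cp1x [Cp2x [Cp1xx [Cp2xx [Cp1z Cp2z]]]]]]].
  pose (Nf := fun x z => chi * (Cabs (psi1 x z) ^ 2 + Cabs (psi2 x z) ^ 2)).
  edestruct (comp_main kappa gamma
    (fun x z => Re (psi1 x z)) (fun x z => Im (psi1 x z)) (fun x z => Re (psi2 x z)) (fun x z => Im (psi2 x z))
    (fun x z => Re (psi1x x z)) (fun x z => Im (psi1x x z)) (fun x z => Re (psi2x x z)) (fun x z => Im (psi2x x z))
    (fun x z => Re (psi1xx x z)) (fun x z => Im (psi1xx x z)) (fun x z => Re (psi2xx x z)) (fun x z => Im (psi2xx x z))
    (fun x z => Re (psi1z x z)) (fun x z => Im (psi1z x z)) (fun x z => Re (psi2z x z)) (fun x z => Im (psi2z x z))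
    Nf S0 S1 S2 S3) as [D0 [D1 [D2 D3]]].
  all: cbv beta.
  all: try (apply dx_Re; assumption); try (apply dx_Im; assumption);
       try (apply dz_Re; assumption); try (apply dz_Im; assumption);
       try (apply jc_Re; assumption); try (apply jc_Im; assumption).
  all: try (intros x z;
    assert (H1 := f_equal Re (Heq1 x z)); assert (H2 := f_equal Im (Heq1 x z));
    assert (H3 := f_equal Re (Heq2 x z)); assert (H4 := f_equal Im (Heq2 x z));
    unfold Cmul, Cadd, Cscal, Copp, RtoC, Ci in H1, H2, H3, H4; simpl in H1, H2, H3, H4;
    unfold Nf; lra).
  all: try (intros z; apply vanish_Re; apply Hdec).
  all: try (intros z; apply vanish_Im; apply Hdec).
  - intros z0. destruct (Hdom z0) as [d [g [G [Hd [Hg Hb]]]]].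
    exists d, g, G. split; [auto | split; [apply imp_conv; auto | exact Hb]].
  - intros z. eapply impI_ext; [| apply imp_conv, (HS0 z)]. intros x. cbv beta. rewrite !Cabs2. ring.
  - intros z. destruct (HS1 z) as [H _]. apply imp_conv in H. simpl in H.
    eapply impI_ext; [| exact H]. intros x. cbv beta. unfold Cadd, Cmul, Cconj. simpl. ring.
  - intros z. destruct (HS2 z) as [L [[_ H] E]]. apply imp_conv in H.
    apply (f_equal Re) in E. unfold Cmul, Ci, RtoC in E. simpl in E.
    eapply impI_val. eapply impI_ext; [| apply (impI_scal _ _ (-1) H)].
    intros x. cbv beta. unfold Csub, Cadd, Copp, Cmul, Cconj. simpl. ring.
    rewrite E. ring.
  - intros z. eapply impI_ext; [| apply imp_conv, (HS3 z)]. intros x. cbv beta. rewrite !Cabs2. ring.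
  - destruct (ode_part kappa gamma S0 S1 S2 S3 Hkg D0 D1 D2 D3) as [O1 [O2 [O3 O4]]].
    repeat split; auto.
Qed.
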